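(* Let $f(x)=\frac1n\sum_{i=1}^nf_i(x)$ on $\mathbb{R}^d$ where each $f_i$ is $\mu_i$-strongly convex and $L_i$-smooth, and let $x^*$ be the minimizer of $f$. Consider SGD with the DecSPS stepsize (defined in the context) with $c_k=\sqrt{k+1}$ for $k\ge0$ and $c_{-1}=c_0$. Then almost surely, for all $k\in\mathbb{N}$, $\|x^k-x^*\|^2\le D^2_{\max}$, where $$D^2_{\max}:=\max\left\{\|x^0-x^*\|^2,\ \frac{2c_0\gamma_b\hat\sigma^2_{B,\max}}{\min\left\{\frac{\mu_{\min}}{2L_{\max}},\mu_{\min}\gamma_b\right\}}\right\},$$ $\mu_{\min}=\min_i\mu_i$ and $L_{\max}=\max_iL_i$.
   Context: Minibatches: fix a batch size $B$; at each iteration a subset $\mathcal S_k\subseteq[n]$ with $|\mathcal S_k|=B$ is sampled (uniformly at random, independently across iterations). For $\mathcal S\subseteq[n]$, $f_{\mathcal S}:=\frac1{|\mathcal S|}\sum_{i\in\mathcal S}f_i$, $f^*_{\mathcal S}:=\inf_xf_{\mathcal S}(x)$, and $\ell^*_{\mathcal S}$ is a given real number with $\ell^*_{\mathcal S}\le f^*_{\mathcal S}$. SGD: $x^{k+1}=x^k-\gamma_k\nabla f_{\mathcal S_k}(x^k)$. DecSPS stepsize: $\gamma_k:=\frac1{c_k}\min\left\{\frac{f_{\mathcal S_k}(x^k)-\ell^*_{\mathcal S_k}}{\|\nabla f_{\mathcal S_k}(x^k)\|^2},\ c_{k-1}\gamma_{k-1}\right\}$ for $k\ge0$, with $c_{-1}=c_0$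 and $\gamma_{-1}=\gamma_b>0$ a fixed constant; if $\nabla f_{\mathcal S_k}(x^k)=0$ the iterate is not updated. $\hat\sigma^2_{B,\max}:=\max_{\mathcal S\subseteq[n],|\mathcal S|=B}[f_{\mathcal S}(x^* )-\ell^*_{\mathcal S}]$. *)

(* Defs.v *)
From HB Require Import structures.
From mathcomp Require Import all_boot all_order all_algebra.
From mathcomp Require Import all_classical all_reals all_analysis.
Set Implicit Arguments. Unset Strict Implicit. Unset Printing Implicit Defensive.
Import Order.TTheory GRing.Theory Num.Theory.
Import numFieldNormedType.Exports.
Local Open Scope ring_scope.

Section Defs.
Variables (R : realType) (d n : nat).

Definition dotv (x y : 'rV[R]_d) : R := \sum_(i < d) x ord0 i * y ord0 i.
Definition sqnorm (x : 'rV[R]_d) : R := dotv x x.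
Definition enorm (x : 'rV[R]_d) : R := Num.sqrt (sqnorm x).

Definition ebasis (i : 'I_d) : 'rV[R]_d := delta_mx ord0 i.

Definition grad (f : 'rV[R]_d -> R) (x : 'rV[R]_d) : 'rV[R]_d :=
  \row_(i < d) derive f x (ebasis i).

Definition strongly_convex (mu : R) (f : 'rV[R]_d -> R) : Prop :=
  0 < mu /\
  forall (x y : 'rV[R]_d) (t : R), 0 <= t -> t <= 1 ->
    f (t *: x + (1 - t) *: y) <=
      t * f x + (1 - t) * f y - mu / 2 * t * (1 - t) * sqnorm (x - y).

Definition smooth (L : R) (f : 'rV[R]_d -> R) : Prop :=
  (forall x, differentiable f x) /\
  forall x y : 'rV[R]_d, enorm (grad f x - grad f y) <= L * enorm (x - y).

Definition favg (f : 'I_n -> 'rV[R]_d -> R) (x : 'rV[R]_d) : R :=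
  (n%:R)^-1 * \sum_(i < n) f i x.

Definition fS (f : 'I_n -> 'rV[R]_d -> R) (S : {set 'I_n}) (x : 'rV[R]_d) : R :=
  (#|S|%:R)^-1 * \sum_(i in S) f i x.

(* hat sigma^2_{B,max} = max over |S| = B of f_S(xstar) - ell_S.
   (Each term is >= 0 since ell_S <= inf f_S <= f_S(xstar), so 0 is a neutral start.) *)
Definition sigma2Bmax (f : 'I_n -> 'rV[R]_d -> R) (ell : {set 'I_n} -> R)
    (B : nat) (xstar : 'rV[R]_d) : R :=
  \big[Num.max/0]_(S : {set 'I_n} | #|S| == B) (fS f S xstar - ell S).

Definition csqrt (k : nat) : R := Num.sqrt (k.+1)%:R.

(* c_{k-1}, with c_{-1} = c_0 *)
Definition cprev (c : nat -> R) (k : nat) : R :=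
  if k is k'.+1 then c k' else c 0%N.

(* One step of SGD with DecSPS: state (x^k, gamma_{k-1}) |-> (x^{k+1}, gamma_k).
   If the minibatch gradient vanishes the iterate is not updated; the Polyak
   ratio is then read as +oo, i.e. gamma_k = c_{k-1} gamma_{k-1} / c_k. *)
Definition decsps_step (f : 'I_n -> 'rV[R]_d -> R) (ell : {set 'I_n} -> R)
    (c : nat -> R) (k : nat) (S : {set 'I_n}) (st : 'rV[R]_d * R)
    : 'rV[R]_d * R :=
  let x := st.1 in
  let gprev := st.2 in
  let g := grad (fS f S) x in
  if g == 0 then (x, (c k)^-1 * (cprev c k * gprev))
  else
    let gam := (c k)^-1 *
               Num.min ((fS f S x - ell S) / sqnorm g) (cprev c k * gprev) in
    (x - gam *: g, gam).

(* state k = (x^k, gamma_{k-1}), with gamma_{-1} = gamma_b *)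
Fixpoint decsps_state (f : 'I_n -> 'rV[R]_d -> R) (ell : {set 'I_n} -> R)
    (c : nat -> R) (batches : nat -> {set 'I_n}) (x0 : 'rV[R]_d) (gamma_b : R)
    (k : nat) : 'rV[R]_d * R :=
  if k is k'.+1 then
    decsps_step f ell c k' (batches k')
      (decsps_state f ell c batches x0 gamma_b k')
  else (x0, gamma_b).

Definition decsps_iter f ell c batches x0 gamma_b k : 'rV[R]_d :=
  (decsps_state f ell c batches x0 gamma_b k).1.

End Defs.

(* Main.v *)
Require Import Defs.
From HB Require Import structures.
From mathcomp Require Import all_boot all_order all_algebra.
From mathcomp Require Import all_classical all_reals all_analysis.
From mathcomp Require Import ring lra.
Import Order.TTheory GRing.Theory Num.Theory.
Import numFieldNormedType.Exports.
Local Open Scope ring_scope.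

Section S.
Context (R : realType) (d : nat).

Lemma sc_first (F : 'rV[R]_d -> R) (mu : R) (x y : 'rV[R]_d) :
  (forall (x y : 'rV[R]_d) (t : R), 0 <= t -> t <= 1 ->
    F (t *: x + (1 - t) *: y) <=
      t * F x + (1 - t) * F y - mu / 2 * t * (1 - t) * sqnorm (x - y)) ->
  differentiable F x ->
  'D_(y - x) F x <= F y - F x - mu / 2 * sqnorm (y - x).
Proof.
move=> Hc dF.
have dv : derivable F x (y - x) by exact: diff_derivable.
have cv : ((fun h : R => h^-1 *: ((F \o shift x) (h *: (y - x)) - F x)) @ (0:R)^'+ --> 'D_(y - x) F x)%classic.
  apply: cvg_trans dv; apply: cvg_app; apply: within_subset => u /= u0.
  by rewrite gt_eqF.
pose g := fun h : R => F y - F x - mu / 2 * (1 - h) * sqnorm (y - x).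
have cg : (g h @[h --> (0:R)^'+] --> (F y - F x - mu / 2 * sqnorm (y - x)))%classic.
  apply: cvg_at_right_filter.
  have -> : F y - F x - mu / 2 * sqnorm (y - x) = g 0 by rewrite /g subr0 mulr1.
  apply: cvgB; first exact: cvg_cst.
  apply: cvgMl; apply: cvgMr; apply: cvgB; [exact: cvg_cst| exact: cvg_id].
apply: (ler_cvg_to cv cg).
near=> h.
have h0 : 0 < h by near: h; exact: nbhs_right_gt.
have h1 : h <= 1 by near: h; apply: nbhs_right_le; exact: ltr01.
rewrite /= /g.
have := Hc y x h (ltW h0) h1.
have -> : h *: y + (1 - h) *: x = h *: (y - x) + x.
  by rewrite scalerBr scalerBl scale1r addrCA addrC.
move=> H.
rewrite -(ler_pM2l h0) mulrA mulfV ?gt_eqF // mul1r.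
rewrite lerBlDr; apply: le_trans H _; rewrite le_eqVlt; apply/orP; left; apply/eqP; ring.

Unshelve. all: end_near. Qed.

Lemma dotvC (a b : 'rV[R]_d) : dotv a b = dotv b a.
Proof. by rewrite /dotv; apply: eq_bigr => i _; rewrite mulrC. Qed.

Lemma dotvDl (a b c : 'rV[R]_d) : dotv (a + b) c = dotv a c + dotv b c.
Proof. by rewrite /dotv -big_split; apply: eq_bigr => i _; rewrite !mxE mulrDl. Qed.

Lemma dotvZl (t : R) (a c : 'rV[R]_d) : dotv (t *: a) c = t * dotv a c.
Proof. by rewrite /dotv mulr_sumr; apply: eq_bigr => i _; rewrite !mxE mulrA. Qed.

Lemma dotvNl (a c : 'rV[R]_d) : dotv (- a) c = - dotv a c.
Proof. by rewrite -scaleN1r dotvZl mulN1r. Qed.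

Lemma dotvBl (a b c : 'rV[R]_d) : dotv (a - b) c = dotv a c - dotv b c.
Proof. by rewrite dotvDl dotvNl. Qed.

Lemma dotvBr (a b c : 'rV[R]_d) : dotv c (a - b) = dotv c a - dotv c b.
Proof. by rewrite !(dotvC c) dotvBl. Qed.

Lemma dotvZr (t : R) (a c : 'rV[R]_d) : dotv c (t *: a) = t * dotv c a.
Proof. by rewrite !(dotvC c) dotvZl. Qed.

Lemma sqnorm_ge0 (a : 'rV[R]_d) : 0 <= sqnorm a.
Proof. by rewrite /sqnorm /dotv; apply: sumr_ge0 => i _; rewrite -expr2 sqr_ge0. Qed.

Lemma sqnorm_eq0 (a : 'rV[R]_d) : sqnorm a = 0 -> a = 0.
Proof.
rewrite /sqnorm /dotv => /eqP; rewrite psumr_eq0; last by move=> i _; rewrite -expr2 sqr_ge0.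
move=> /allP H; apply/rowP => i; rewrite mxE.
have := H i (mem_index_enum i); rewrite /= -expr2 sqrf_eq0 => /eqP ->.
by [].
Qed.

Lemma sqnormB (a b : 'rV[R]_d) :
  sqnorm (a - b) = sqnorm a - 2 * dotv a b + sqnorm b.
Proof.
rewrite /sqnorm dotvBl !dotvBr (dotvC b a); ring.
Qed.

Lemma sqnormNB (a b : 'rV[R]_d) : sqnorm (a - b) = sqnorm (b - a).
Proof. by rewrite !sqnormB (dotvC a b); ring. Qed.

Lemma dot_grad (F : 'rV[R]_d -> R) x v : differentiable F x ->
  dotv (grad F x) v = 'D_v F x.
Proof.
move=> dF; rewrite deriveE // {2}(row_sum_delta v) linear_sum /dotv.
apply: eq_bigr => i _; rewrite mxE deriveE // linearZ /= mulrC.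
by [].
Qed.



Context (n : nat).

Lemma diff_fS (f : 'I_n -> 'rV[R]_d -> R) (S : {set 'I_n}) x :
  (forall i, differentiable (f i) x) -> differentiable (fS f S) x.
Proof.
move=> df.
have -> : fS f S = (#|S|%:R^-1 : R) *: \sum_(i < n) (fun y => if i \in S then f i y else 0).
  apply/funext => y; rewrite /fS /= fct_sumE big_mkcond /=.
  by [].
apply: differentiableZ; apply: differentiable_sum => i.
case: (i \in S); first exact: df.
exact: differentiable_cst.
Qed.

Lemma fS_sc (f : 'I_n -> 'rV[R]_d -> R) (mu : 'I_n -> R) (mu_min : R) (S : {set 'I_n}) :
  (0 < #|S|)%N -> (forall i, strongly_convex (mu i) (f i)) -> (forall i, mu_min <= mu i) ->
  forall (x y : 'rV[R]_d) (t : R), 0 <= t -> t <= 1 ->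
    fS f S (t *: x + (1 - t) *: y) <=
      t * fS f S x + (1 - t) * fS f S y - mu_min / 2 * t * (1 - t) * sqnorm (x - y).
Proof.
move=> hS hsc hmu x y t t0 t1.
set s := sqnorm (x - y).
have hs : 0 <= s by exact: sqnorm_ge0.
have H : \sum_(i in S) f i (t *: x + (1 - t) *: y) <=
   \sum_(i in S) (t * f i x + (1 - t) * f i y - mu_min / 2 * t * (1 - t) * s).
  apply: ler_sum => i _; apply: le_trans ((hsc i).2 x y t t0 t1) _.
  rewrite lerD2l lerN2.
  have P := mulr_ge0 (mulr_ge0 (mulr_ge0 t0 (ltac:(by rewrite subr_ge0) : 0 <= 1 - t)) hs) (ltac:(by rewrite subr_ge0) : 0 <= mu i - mu_min).
  rewrite -/s -subr_ge0 (_ : _ - _ = t * (1 - t) * s * (mu i - mu_min) / 2); [by rewrite divr_ge0 | ring].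
rewrite sumrB big_split /= -!mulr_sumr sumr_const in H.
rewrite /fS.
have hN : (#|S|%:R : R) != 0 by rewrite pnatr_eq0 -lt0n.
have hk : 0 <= (#|S|%:R : R)^-1 by rewrite invr_ge0.
apply: le_trans (ler_wpM2l hk H) _.
rewrite le_eqVlt; apply/orP; left; apply/eqP.
rewrite -(mulr_natr s). field.
done.
Qed.


Lemma sqnormZ (t : R) (a : 'rV[R]_d) : sqnorm (t *: a) = t ^+ 2 * sqnorm a.
Proof. by rewrite /sqnorm dotvZl dotvZr mulrA expr2. Qed.

Lemma dotv0r (a : 'rV[R]_d) : dotv a 0 = 0.
Proof. by rewrite /dotv big1 // => i _; rewrite mxE mulr0. Qed.

Lemma sqnorm_ebasis (j : 'I_d) : sqnorm (@ebasis R d j) = 1.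
Proof.
rewrite /sqnorm /dotv (bigD1 j) //= big1 ?addr0.
  by rewrite /ebasis mxE !eqxx mulr1.
by move=> i hij; rewrite /ebasis mxE (negbTE hij) andbF mul0r.
Qed.

Lemma mu_le_L (F : 'rV[R]_d -> R) (mu L : R) :
  (0 < d)%N -> strongly_convex mu F -> smooth L F -> mu <= L.
Proof.
move=> hd [mu0 hc] [dF hL].
set b := @ebasis R d (Ordinal hd).
have hb : sqnorm b = 1 by exact: sqnorm_ebasis.
have h1 := @sc_first F mu 0 b hc (dF 0).
have h2 := @sc_first F mu b 0 hc (dF b).
rewrite -dot_grad // in h1; rewrite -dot_grad // in h2.
rewrite subr0 hb in h1.
rewrite sqnormNB subr0 hb dotvBr dotv0r in h2.
set a := grad F b - grad F 0.
set p := dotv a b.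
have hp : mu <= p by rewrite /p /a dotvBl; lra.
have hA := hL b 0.
rewrite subr0 /enorm hb sqrtr1 mulr1 -/a in hA.
have hcs : p ^+ 2 <= sqnorm a.
  have := sqnorm_ge0 (a - p *: b).
  rewrite sqnormB dotvZr /sqnorm dotvZl dotvZr -/(sqnorm b) hb -/p.
  move=> H; rewrite /sqnorm expr2; nra.
have hA0 : 0 <= sqnorm a by exact: sqnorm_ge0.
have hsq := sqr_sqrtr hA0.
have hs0 : 0 <= Num.sqrt (sqnorm a) by exact: sqrtr_ge0.
set sA := Num.sqrt (sqnorm a) in hA hsq hs0.
have : p <= sA by nra.
lra.
Qed.

End S.

Lemma csqrt_ge1 (R : realType) k : 1 <= csqrt R k.
Proof.
by rewrite /csqrt -{1}sqrtr1 ler_sqrt // ler1n.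
Qed.

Lemma cprev_ge1 (R : realType) k : 1 <= cprev (@csqrt R) k.
Proof. by case: k => [|k] /=; exact: csqrt_ge1. Qed.

Theorem proposition1 (R : realType) (d n B : nat)
  (f : 'I_n -> 'rV[R]_d -> R) (mu L : 'I_n -> R) (mu_min L_max : R)
  (ell : {set 'I_n} -> R) (xstar x0 : 'rV[R]_d) (gamma_b : R)
  (batches : nat -> {set 'I_n}) :
  (0 < n)%N -> (0 < B <= n)%N ->
  (forall i, strongly_convex (mu i) (f i)) ->
  (forall i, smooth (L i) (f i)) ->
  (forall i, mu_min <= mu i) -> (exists i, mu i = mu_min) ->
  (forall i, L i <= L_max) -> (exists i, L i = L_max) ->
  (forall x, favg f xstar <= favg f x) ->
  (forall (S : {set 'I_n}) x, #|S| = B -> ell S <= fS f S x) ->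
  0 < gamma_b ->
  (forall k, #|batches k| = B) ->
  forall k : nat,
    sqnorm (decsps_iter f ell (@csqrt R) batches x0 gamma_b k - xstar) <=
    Num.max (sqnorm (x0 - xstar))
      (2 * csqrt R 0 * gamma_b * sigma2Bmax f ell B xstar /
         Num.min (mu_min / (2 * L_max)) (mu_min * gamma_b)).
Proof.
move=> hn /andP[hB0 hBn] hsc hsm hmu [i0 hi0] hL [i1 hi1] hopt hell hgb hbat k.
case: (posnP d) => [d0 | dpos].
  subst d; rewrite le_max; apply/orP; left.
  by rewrite /sqnorm /dotv !big_ord0.
have hmu0 : 0 < mu_min by rewrite -hi0; exact: (hsc i0).1.
have hmuL : mu_min <= L_max.
  rewrite -hi1; apply: le_trans (hmu i1) _; exact: mu_le_L (hsc i1) (hsm i1).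
have hL0 : 0 < L_max by apply: lt_le_trans hmuL.
set sigma := sigma2Bmax f ell B xstar.
have hs0 : 0 <= sigma by exact: bigmax_ge_id.
have hsS : forall S : {set 'I_n}, #|S| = B -> fS f S xstar - ell S <= sigma.
  move=> S hS; rewrite /sigma /sigma2Bmax.
  have hS' : #|S| == B by rewrite hS.
  by apply: le_bigmax_cond.
set m := Num.min _ _.
have hm0 : 0 < m.
  rewrite lt_min; apply/andP; split; [apply: divr_gt0 => //; lra | exact: mulr_gt0].
have hm1 : m <= mu_min * gamma_b by rewrite ge_min lexx orbT.
have hm2 : m <= 1.
  rewrite ge_min; apply/orP; left.
  rewrite ler_pdivrMr ?mulr_gt0 // mul1r; lra.
have c0 : csqrt R 0 = 1 by rewrite /csqrt sqrtr1.
rewrite c0 mulr1.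
set Q := 2 * gamma_b * sigma / m.
have hQ1 : 2 * sigma <= mu_min * Q.
  rewrite /Q mulrA ler_pdivlMr //.
  have := ler_wpM2l (ltac:(lra) : 0 <= 2 * sigma) hm1; lra.
have hQ2 : 2 * gamma_b * sigma <= Q.
  rewrite /Q ler_pdivlMr //.
  have : 0 <= 2 * gamma_b * sigma by rewrite !mulr_ge0 // ltW.
  nra.
set M := Num.max _ Q.
have hD0M : sqnorm (x0 - xstar) <= M by rewrite le_max lexx.
have hQM : Q <= M by rewrite le_max lexx orbT.
suff : forall k, let st := decsps_state f ell (@csqrt R) batches x0 gamma_b k in
  0 <= st.2 /\ cprev (@csqrt R) k * st.2 <= gamma_b /\ sqnorm (st.1 - xstar) <= M.
  by move=> /(_ k) [_ [_]].
elim=> [|j IH] /=.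
  by rewrite c0 mul1r lexx ltW.
move: IH => /=.
case: (decsps_state f ell (@csqrt R) batches x0 gamma_b j) => x gp /= [gp0 [hgp hD]].
rewrite /decsps_step /=.
have hc1 := csqrt_ge1 R j.
have hcp1 := cprev_ge1 R j.
set c := csqrt R j in hc1 *.
set cp := cprev (@csqrt R) j in hcp1 *.
have hc0 : 0 < c by lra.
set S := batches j.
set F := fS f S.
set g := grad F x.
case: eqP => [g0 | gn0] /=.
  split; first by rewrite mulr_ge0 // ?invr_ge0 ?mulr_ge0 //; lra.
  by rewrite mulVKf ?gt_eqF.
rewrite -/cp in hgp.
set P := (F x - ell S) / sqnorm g.
set mn := Num.min P (cp * gp).
set gam := c^-1 * mn.
have hS : #|S| = B := hbat j.
have hFx : ell S <= F x := hell S x hS.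
have hsg : 0 < sqnorm g.
  rewrite lt_def sqnorm_ge0 andbT; apply/eqP => /sqnorm_eq0; exact: gn0.
have hP0 : 0 <= P by apply: divr_ge0; [rewrite subr_ge0 | exact: ltW].
have hmin0 : 0 <= mn by rewrite le_min hP0 /= mulr_ge0 //; lra.
have hgam0 : 0 <= gam by rewrite /gam mulr_ge0 // invr_ge0 ltW.
have hcgam : c * gam = mn by rewrite /gam mulVKf ?gt_eqF.
have hmnP : mn <= P by rewrite /mn ge_min lexx.
have hmncp : mn <= cp * gp by rewrite /mn ge_min lexx orbT.
have hgamP : gam <= P by nra.
have hgamb : gam <= gamma_b by nra.
split; first exact: hgam0.
split; first by rewrite hcgam; lra.
have hxe : x - gam *: g - xstar = (x - xstar) - gam *: g by rewrite addrAC.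
rewrite hxe sqnormB sqnormZ dotvZr.
have hS0 : (0 < #|S|)%N by rewrite hS.
have hfo := @sc_first R d F mu_min x xstar
  (@fS_sc R d n f mu mu_min S hS0 hsc hmu)
  (@diff_fS R d n f S x (fun i => (hsm i).1 x)).
rewrite -dot_grad in hfo; last exact: (@diff_fS R d n f S x (fun i => (hsm i).1 x)).
rewrite sqnormNB -/g in hfo.
have ht : dotv (x - xstar) g = - dotv g (xstar - x) by rewrite dotvC !dotvBr opprB.
rewrite ht.
have hsig := hsS S hS.
have hPs : P * sqnorm g = F x - ell S by rewrite /P divfK ?gt_eqF.
have hsq : gam ^+ 2 * sqnorm g <= gam * (F x - ell S).
  rewrite -hPs expr2 -mulrA; apply: ler_wpM2l => //; apply: ler_wpM2r => //; exact: ltW.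
set D := sqnorm (x - xstar) in hD hfo *.
set t := dotv g (xstar - x) in hfo *.
have hD0 : 0 <= D by exact: sqnorm_ge0.
have hprod : gam * t <= gam * (F xstar - F x - mu_min / 2 * D) by exact: ler_wpM2l.
have hp2 : gam * (F xstar - ell S) <= gam * sigma by exact: ler_wpM2l.
have hp3 : 0 <= gam * (F x - ell S) by rewrite mulr_ge0 // subr_ge0.
case: (lerP (gam * mu_min) 1) => hgm.
  have e1 : 0 <= (1 - gam * mu_min) * (M - D) by rewrite mulr_ge0 // subr_ge0.
  have e2 : 0 <= gam * (mu_min * Q - 2 * sigma) by rewrite mulr_ge0 // subr_ge0.
  have e3 : 0 <= gam * mu_min * (M - Q) by rewrite mulr_ge0 ?subr_ge0 // mulr_ge0 // ltW.
  nra.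
have e1 : 0 <= (gam * mu_min - 1) * D by rewrite mulr_ge0 // subr_ge0 ltW.
have e2 : 0 <= (gamma_b - gam) * sigma by rewrite mulr_ge0 // subr_ge0.
nra.
Qed.
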